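(* Let $p\ge1$, $n>1$ be integers, $\mathcal E,\mathcal F$ Hilbert spaces, and for $i=1,\ldots,n-1$ let $\Phi_i(z)=\sum_{\ell=0}^pA_\ell^{(i)}z^\ell\in H^\infty\mathcal L(\mathcal E)$ and $\tilde\Phi_i(z)=\sum_{\ell=0}^p\tilde A_\ell^{(i)}z^\ell\in H^\infty\mathcal L(\mathcal F)$ with $A_\ell^{(i)}\in\mathcal L(\mathcal E)$, $\tilde A_\ell^{(i)}\in\mathcal L(\mathcal F)$. Then the $n$-tuple $(T_{\Phi_1},\dots,T_{\Phi_{n-1}},T_z)$ on $H^2(\mathcal E)$ is unitarily equivalent to the $n$-tuple $(T_{\tilde\Phi_1},\dots,T_{\tilde\Phi_{n-1}},T_z)$ on $H^2(\mathcal F)$ if and only if the tuples $(A_\ell^{(i)})_{i=1,\ell=0}^{n-1,p}$ and $(\tilde A_\ell^{(i)})_{i=1,\ell=0}^{n-1,p}$ are unitarily equivalent, i.e. there is a unitary $W:\mathcal E\to\mathcal F$ with $WA_\ell^{(i)}W^*=\tilde A_\ell^{(i)}$ for all $i,\ell$.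
   Context: $H^2(\mathcal E)$ is the $\mathcal E$-valued Hardy space on $\mathbb D$, $H^\infty\mathcal L(\mathcal E)$ the bounded analytic $\mathcal L(\mathcal E)$-valued functions on $\mathbb D$, $T_\Phi$ the multiplication operator $f\mapsto\Phi f$ on $H^2(\mathcal E)$, and $T_z$ the unilateral shift. Unitary equivalence of operator tuples means a single unitary intertwines all corresponding entries. *)

(* Defs.v *)
From HB Require Import structures.
From mathcomp Require Import all_boot all_order all_algebra.
From mathcomp Require Import complex.
From mathcomp Require Import boolp classical_sets reals.
Set Implicit Arguments. Unset Strict Implicit. Unset Printing Implicit Defensive.
Import Order.TTheory GRing.Theory Num.Theory.
Local Open Scope ring_scope.

Section Hilbert.
Variable R : realType.
Local Notation C := R[i].

Record inner_product (V : lmodType C) (ip : V -> V -> C) : Prop := {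
  ip_linl : forall (a : C) (x y z : V), ip (a *: x + y) z = a * ip x z + ip y z;
  ip_conj : forall x y : V, ip y x = conjc (ip x y);
  ip_ge0  : forall x : V, 0 <= ip x x;
  ip_def  : forall x : V, ip x x = 0 -> x = 0 }.

Definition ipnorm (V : lmodType C) (ip : V -> V -> C) (x : V) : R :=
  Num.sqrt (complex.Re (ip x x)).

Definition ip_complete (V : lmodType C) (ip : V -> V -> C) : Prop :=
  forall u : nat -> V,
    (forall e : R, 0 < e -> exists N, forall m k, (N <= m)%N -> (N <= k)%N ->
        ipnorm ip (u m - u k) < e) ->
    exists l : V, forall e : R, 0 < e -> exists N, forall k, (N <= k)%N ->
        ipnorm ip (u k - l) < e.

Definition hilbert (V : lmodType C) (ip : V -> V -> C) : Prop :=
  inner_product ip /\ ip_complete ip.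

Definition bounded_op (V : lmodType C) (ip : V -> V -> C) (T : V -> V) : Prop :=
  (forall (a : C) (x y : V), T (a *: x + y) = a *: T x + T y) /\
  (exists M : R, forall x, ipnorm ip (T x) <= M * ipnorm ip x).

Definition unitary (V U : lmodType C) (ipV : V -> V -> C) (ipU : U -> U -> C)
  (W : V -> U) : Prop :=
  (forall (a : C) (x y : V), W (a *: x + y) = a *: W x + W y) /\
  (forall x, ipnorm ipU (W x) = ipnorm ipV x) /\
  (forall y, exists x, W x = y).

Definition adjoint_of (V U : lmodType C) (ipV : V -> V -> C) (ipU : U -> U -> C)
  (W : V -> U) (Wa : U -> V) : Prop :=
  forall x y, ipU (W x) y = ipV x (Wa y).

(* H^2(V), realised via Taylor coefficients as l^2(N, V) *)
Definition psum2 (V : lmodType C) (ip : V -> V -> C) (f : nat -> V) (N : nat) : R :=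
  \sum_(k < N) ipnorm ip (f k) ^+ 2.

Definition inH2 (V : lmodType C) (ip : V -> V -> C) (f : nat -> V) : Prop :=
  exists M : R, forall N, psum2 ip f N <= M.

Definition H2norm2 (V : lmodType C) (ip : V -> V -> C) (f : nat -> V) : R :=
  reals.sup (fun x : R => exists N, x = psum2 ip f N).

(* unitary operator H^2(V) -> H^2(U) (only its values on H^2(V) matter) *)
Definition unitary_H2 (V U : lmodType C) (ipV : V -> V -> C) (ipU : U -> U -> C)
  (T : (nat -> V) -> (nat -> U)) : Prop :=
  (forall f, inH2 ipV f -> inH2 ipU (T f)) /\
  (forall (a : C) (f g : nat -> V), inH2 ipV f -> inH2 ipV g ->
      T (fun k => a *: f k + g k) = (fun k => a *: T f k + T g k)) /\
  (forall f, inH2 ipV f -> H2norm2 ipU (T f) = H2norm2 ipV f) /\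
  (forall g, inH2 ipU g -> exists f, inH2 ipV f /\ T f = g).

(* T_Phi for Phi(z) = sum_{l<=p} A_l z^l : (Phi f)_k = sum_{l <= min(p,k)} A_l f_{k-l} *)
Definition toeplitz (V : lmodType C) (p : nat) (A : 'I_p.+1 -> V -> V)
  (f : nat -> V) : nat -> V :=
  fun k => \sum_(l < p.+1 | (l <= k)%N) A l (f (k - l)%N).

(* T_z : the unilateral shift *)
Definition shiftH2 (V : lmodType C) (f : nat -> V) : nat -> V :=
  fun k => if k is k'.+1 then f k' else 0.

End Hilbert.

(* Main.v *)
Require Import Defs.
From HB Require Import structures.
From mathcomp Require Import all_boot all_order all_algebra.
From mathcomp Require Import complex.
From mathcomp Require Import reals.
From mathcomp Require Import boolp classical_sets.
From mathcomp Require Import ring lra.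
Import Order.TTheory GRing.Theory Num.Theory.
Local Open Scope ring_scope.
Set Implicit Arguments. Unset Strict Implicit. Unset Printing Implicit Defensive.

Section Gen.
Variable R : realType.
Local Notation C := R[i].
Lemma cD (a b : R[i]) : conjc (a + b) = conjc a + conjc b.
Proof. by case: a; case: b => ? ? ? ? /=; rewrite opprD. Qed.
Lemma cM (a b : R[i]) : conjc (a * b) = conjc a * conjc b.
Proof. case: a; case: b => ? ? ? ? /=. congr Complex; ring. Qed.
Lemma cN (a : R[i]) : conjc (- a) = - conjc a.
Proof. by case: a. Qed.
Lemma c0 : conjc (0 : R[i]) = 0.
Proof. by rewrite /= oppr0. Qed.

Lemma ReD (a b : C) : complex.Re (a + b) = complex.Re a + complex.Re b.
Proof. by case: a; case: b. Qed.
Lemma ImD (a b : C) : complex.Im (a + b) = complex.Im a + complex.Im b.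
Proof. by case: a; case: b. Qed.
Lemma ReJ (a : C) : complex.Re (conjc a) = complex.Re a.
Proof. by case: a. Qed.
Lemma Rei (a : C) : complex.Re ('i%C * a) = - complex.Im a.
Proof. by case: a => x y /=; rewrite !mul0r !mul1r sub0r. Qed.
Lemma complex_ext (a b : C) : complex.Re a = complex.Re b -> complex.Im a = complex.Im b -> a = b.
Proof. by case: a; case: b => /= ? ? ? ? -> ->. Qed.

Section IP.
Variables (V : lmodType C) (ip : V -> V -> C) (Hip : inner_product ip).

Lemma ip0l z : ip 0 z = 0.
Proof.
have := ip_linl Hip (-1) 0 0 z.
by rewrite scaler0 addr0 mulN1r addNr.
Qed.
Lemma ipDl x y z : ip (x + y) z = ip x z + ip y z.
Proof. by have := ip_linl Hip 1 x y z; rewrite scale1r mul1r. Qed.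
Lemma ipZl a x z : ip (a *: x) z = a * ip x z.
Proof. by have := ip_linl Hip a x 0 z; rewrite addr0 ip0l addr0. Qed.
Lemma ipDr x y z : ip z (x + y) = ip z x + ip z y.
Proof. by rewrite (ip_conj Hip) ipDl cD -!(ip_conj Hip). Qed.
Lemma ipZr a x z : ip z (a *: x) = conjc a * ip z x.
Proof. by rewrite (ip_conj Hip) ipZl cM -!(ip_conj Hip). Qed.
Lemma ipNl x z : ip (- x) z = - ip x z.
Proof. by rewrite -scaleN1r ipZl mulN1r. Qed.
Lemma ipNr x z : ip z (- x) = - ip z x.
Proof. by rewrite (ip_conj Hip) ipNl cN -(ip_conj Hip). Qed.
Lemma ip0r z : ip z 0 = 0.
Proof. by rewrite (ip_conj Hip) ip0l c0. Qed.

Lemma ipxx_Im x : complex.Im (ip x x) = 0.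
Proof. by have := ip_ge0 Hip x; rewrite lecE => /andP[/eqP -> _]. Qed.
Lemma ipxx_Re x : 0 <= complex.Re (ip x x).
Proof. by have := ip_ge0 Hip x; rewrite lecE => /andP[_ ->]. Qed.
Lemma ipnorm_ge0 x : 0 <= ipnorm ip x.
Proof. exact: sqrtr_ge0. Qed.
Lemma ipnorm_sq x : ipnorm ip x ^+ 2 = complex.Re (ip x x).
Proof. by rewrite /ipnorm sqr_sqrtr // ipxx_Re. Qed.
Lemma ipnorm_eq0 x : ipnorm ip x = 0 -> x = 0.
Proof.
move=> h; apply: (ip_def Hip); apply: complex_ext; last by rewrite ipxx_Im.
by rewrite -ipnorm_sq h expr0n.
Qed.
Lemma ipnorm0 : ipnorm ip 0 = 0.
Proof. by rewrite /ipnorm ip0l sqrtr0. Qed.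
Lemma ipnormN x : ipnorm ip (- x) = ipnorm ip x.
Proof. by rewrite /ipnorm ipNl ipNr opprK. Qed.
Lemma Re_ipD x y : complex.Re (ip (x + y) (x + y)) =
  complex.Re (ip x x) + complex.Re (ip y y) + 2%:R * complex.Re (ip x y).
Proof.
rewrite ipDl !ipDr !ReD [ip y x](ip_conj Hip) ReJ. 
by rewrite mulr2n mulrDl mul1r; lra.
Qed.
End IP.

Definition lin (V U : lmodType C) (W : V -> U) :=
  forall (a : C) x y, W (a *: x + y) = a *: W x + W y.

Section Lin.
Variables (V U : lmodType C) (W : V -> U) (HW : lin W).
Lemma lin0 : W 0 = 0.
Proof. by have := HW (-1) 0 0; rewrite scaler0 addr0 scaleN1r addNr. Qed.
Lemma linD x y : W (x + y) = W x + W y.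
Proof. by have := HW 1 x y; rewrite !scale1r. Qed.
Lemma linZ a x : W (a *: x) = a *: W x.
Proof. by have := HW a x 0; rewrite !addr0 lin0 addr0. Qed.
Lemma linN x : W (- x) = - W x.
Proof. by rewrite -scaleN1r linZ scaleN1r. Qed.
Variables (ipV : V -> V -> C) (ipU : U -> U -> C).
Hypotheses (HV : inner_product ipV) (HU : inner_product ipU).
Hypothesis Hn : forall x, ipnorm ipU (W x) = ipnorm ipV x.
Lemma Re_pres x : complex.Re (ipU (W x) (W x)) = complex.Re (ipV x x).
Proof. by rewrite -(ipnorm_sq HU) -(ipnorm_sq HV) Hn. Qed.
Lemma Re_polar x y : complex.Re (ipU (W x) (W y)) = complex.Re (ipV x y).
Proof.
have := Re_pres (x + y); rewrite linD (Re_ipD HU) (Re_ipD HV) !Re_pres.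
move=> h; have : 2%:R * complex.Re (ipU (W x) (W y)) = 2%:R * complex.Re (ipV x y) by lra.
by move/(mulfI _); apply; rewrite pnatr_eq0.
Qed.
Lemma polar x y : ipU (W x) (W y) = ipV x y.
Proof.
apply: complex_ext; first exact: Re_polar.
have := Re_polar ('i%C *: x) y; rewrite linZ (ipZl HU) (ipZl HV) !Rei.
exact: oppr_inj.
Qed.
End Lin.

Lemma psum2_ext (V U : lmodType C) (ipV : V -> V -> C) (ipU : U -> U -> C)
  (f : nat -> V) (g : nat -> U) :
  (forall k, ipnorm ipU (g k) = ipnorm ipV (f k)) -> psum2 ipU g = psum2 ipV f.
Proof. by move=> h; apply: funext => N; apply: eq_bigr => i _; rewrite h. Qed.
Lemma inH2_ext (V U : lmodType C) (ipV : V -> V -> C) (ipU : U -> U -> C)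
  (f : nat -> V) (g : nat -> U) :
  (forall k, ipnorm ipU (g k) = ipnorm ipV (f k)) -> inH2 ipU g <-> inH2 ipV f.
Proof. by move=> /psum2_ext h; rewrite /inH2 h. Qed.
Lemma H2norm2_ext (V U : lmodType C) (ipV : V -> V -> C) (ipU : U -> U -> C)
  (f : nat -> V) (g : nat -> U) :
  (forall k, ipnorm ipU (g k) = ipnorm ipV (f k)) -> H2norm2 ipU g = H2norm2 ipV f.
Proof. by move=> /psum2_ext h; rewrite /H2norm2 h. Qed.

Section H2.
Variables (V : lmodType C) (ip : V -> V -> C) (Hip : inner_product ip).
Definition cns (x : V) (h : nat -> V) : nat -> V :=
  fun k => if k is k'.+1 then h k' else x.
Definition tl (f : nat -> V) : nat -> V := fun k => f k.+1.
Lemma cns_tl f : cns (f 0%N) (tl f) = f.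
Proof. by apply: funext; case. Qed.
Lemma psum2_0 h : psum2 ip h 0 = 0.
Proof. by rewrite /psum2 big_ord0. Qed.
Lemma psum2_cns x h N : psum2 ip (cns x h) N.+1 = ipnorm ip x ^+ 2 + psum2 ip h N.
Proof. by rewrite /psum2 big_ord_recl. Qed.
Lemma psum2_ge0 h N : 0 <= psum2 ip h N.
Proof. by apply: sumr_ge0 => i _; apply: sqr_ge0. Qed.
Lemma inH2_cns x h : inH2 ip (cns x h) <-> inH2 ip h.
Proof.
have c0 := sqr_ge0 (ipnorm ip x).
split=> -[M hM].
  exists M => N; have := hM N.+1; rewrite psum2_cns; lra.
exists (ipnorm ip x ^+ 2 + M) => -[|N]; last by rewrite psum2_cns lerD2l.
have := hM 0%N; rewrite !psum2_0; lra.
Qed.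
Lemma has_sup_psum2 h : inH2 ip h -> has_sup (fun x => exists N, x = psum2 ip h N).
Proof.
case=> M hM; split; first by exists (psum2 ip h 0); exists 0%N.
by exists M => y [N ->].
Qed.
Lemma H2norm2_ub h N : inH2 ip h -> psum2 ip h N <= H2norm2 ip h.
Proof. by move=> /has_sup_psum2 /sup_upper_bound; apply; exists N. Qed.
Lemma H2norm2_ge0 h : inH2 ip h -> 0 <= H2norm2 ip h.
Proof. by move=> /(H2norm2_ub 0); rewrite psum2_0. Qed.
Lemma H2norm2_cns x h : inH2 ip h ->
  H2norm2 ip (cns x h) = ipnorm ip x ^+ 2 + H2norm2 ip h.
Proof.
move=> hh; have hc : inH2 ip (cns x h) by apply/inH2_cns.
have c0 := sqr_ge0 (ipnorm ip x).
have s0 := H2norm2_ge0 hh.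
apply/le_anti/andP; split.
  apply: ge_sup; first by exists (psum2 ip (cns x h) 0); exists 0%N.
  move=> y [[|N] ->]; first by rewrite psum2_0; lra.
  by rewrite psum2_cns lerD2l H2norm2_ub.
have : H2norm2 ip h <= H2norm2 ip (cns x h) - ipnorm ip x ^+ 2; last by lra.
apply: ge_sup; first by exists (psum2 ip h 0); exists 0%N.
move=> y [N ->]; have := H2norm2_ub N.+1 hc; rewrite psum2_cns; lra.
Qed.
Lemma psum2_z N : psum2 ip (fun _ => 0) N = 0.
Proof. by rewrite /psum2 big1 // => i _; rewrite ipnorm0 // expr0n. Qed.
Lemma inH2_z : inH2 ip (fun _ => 0).
Proof. by exists 0 => N; rewrite psum2_z. Qed.
Lemma H2norm2_z : H2norm2 ip (fun _ => 0) = 0.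
Proof.
apply/le_anti/andP; split; last exact: H2norm2_ge0 inH2_z.
apply: ge_sup; first by exists 0; exists 0%N; rewrite psum2_z.
by move=> y [N ->]; rewrite psum2_z.
Qed.
Lemma H2norm2_d x : H2norm2 ip (cns x (fun _ => 0)) = ipnorm ip x ^+ 2.
Proof. by rewrite (H2norm2_cns _ inH2_z) H2norm2_z addr0. Qed.
Lemma H2norm2_eq0 f : inH2 ip f -> H2norm2 ip f = 0 -> forall k, f k = 0.
Proof.
move=> hf h0 k; elim: k f hf h0 => [|k IH] f hf h0.
  rewrite -(cns_tl f) in hf h0.
  have ht : inH2 ip (tl f) by apply/(inH2_cns (f 0%N)).
  rewrite H2norm2_cns // in h0.
  have := H2norm2_ge0 ht; have := sqr_ge0 (ipnorm ip (f 0%N)) => a b.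
  apply: (ipnorm_eq0 Hip); apply/eqP; rewrite -(@eqrXn2 _ 2) ?ipnorm_ge0 //.
  by rewrite expr0n /=; apply/eqP; lra.
rewrite -(cns_tl f) in hf h0.
have ht : inH2 ip (tl f) by apply/(inH2_cns (f 0%N)).
rewrite H2norm2_cns // in h0.
have := H2norm2_ge0 ht; have := sqr_ge0 (ipnorm ip (f 0%N)) => a b.
by apply: (IH (tl f)) => //; lra.
Qed.
Lemma inH2_fin N f : (forall k, (N <= k)%N -> f k = 0) -> inH2 ip f.
Proof.
elim: N f => [|N IH] f hf.
  have -> : f = (fun _ => 0) by apply: funext => k; apply: hf.
  exact: inH2_z.
rewrite -(cns_tl f); apply/inH2_cns; apply: IH => k hk; exact: hf.
Qed.
End H2.

Lemma cnsE (V : lmodType C) (x : V) k : cns x (fun _ => 0) k = if k == 0%N then x else 0.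
Proof. by case: k. Qed.
Lemma shift_cns (V : lmodType C) (h : nat -> V) : shiftH2 h = cns 0 h.
Proof. by apply: funext; case. Qed.
Lemma toep_cns (V : lmodType C) p (B : 'I_p.+1 -> V -> V) (HB : forall m, B m 0 = 0)
  x (l : 'I_p.+1) : toeplitz B (cns x (fun _ => 0)) l = B l x.
Proof.
rewrite /toeplitz (bigD1 l) //= cnsE subnn eqxx big1 ?addr0 // => m /andP[hml hne].
rewrite cnsE subn_eq0.
have -> : (l <= m)%N = false.
  by apply/negbTE; rewrite -ltnNge ltn_neqAle hml andbT; exact: hne.
exact: HB.
Qed.
Lemma toep_fin (V : lmodType C) p (B : 'I_p.+1 -> V -> V) (HB : forall m, B m 0 = 0)
  x k : (p.+1 <= k)%N -> toeplitz B (cns x (fun _ => 0)) k = 0.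
Proof.
move=> hk; rewrite /toeplitz big1 // => m _.
by rewrite cnsE subn_eq0 leqNgt (leq_trans (ltn_ord m) hk) /= HB.
Qed.

Lemma bwd (V U : lmodType C) ipV ipU (HV : inner_product ipV) (HU : inner_product ipU)
  (I : Type) p (A : I -> 'I_p.+1 -> V -> V) (At : I -> 'I_p.+1 -> U -> U) W Wa :
  unitary ipV ipU W -> adjoint_of ipV ipU W Wa -> (forall i l y, W (A i l (Wa y)) = At i l y) ->
  exists T : (nat -> V) -> (nat -> U), unitary_H2 ipV ipU T /\
    (forall i f, inH2 ipV f -> T (toeplitz (A i) f) = toeplitz (At i) (T f)) /\
    (forall f, inH2 ipV f -> T (shiftH2 f) = shiftH2 (T f)).
Proof.
case=> HW [Hn Hs] Hadj Hint.
have WaW : forall x, Wa (W x) = x.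
  move=> x; apply/eqP; rewrite -subr_eq0; apply/eqP; apply: (ip_def HV).
  rewrite (ipDr HV) (ipNr HV) -Hadj (polar HW HV HU Hn).
  by rewrite addrN.
have WWa : forall y, W (Wa y) = y by move=> y; case: (Hs y) => x <-; rewrite WaW.
have WA : forall i l x, W (A i l x) = At i l (W x) by move=> i l x; rewrite -Hint WaW.
exists (fun f k => W (f k)).
split; [split; [|split; [|split]]|split].
- by move=> f hf; apply/(inH2_ext (fun k => Hn (f k))).
- by move=> a f g _ _; apply: funext => k; exact: HW.
- by move=> f _; exact: H2norm2_ext (fun k => Hn (f k)).
- move=> g hg; exists (fun k => Wa (g k)); split; last by apply: funext => k; rewrite WWa.
  have hn : forall k, ipnorm ipV (Wa (g k)) = ipnorm ipU (g k) by move=> k; rewrite -Hn WWa.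
  by apply/(inH2_ext hn).
- move=> i f _; apply: funext => k.
  rewrite /toeplitz (big_morph W (linD HW) (lin0 HW)); apply: eq_bigr => l _; exact: WA.
- by move=> f _; apply: funext => -[|k] //=; exact: lin0 HW.
Qed.

Lemma fwd (V U : lmodType C) ipV ipU (HV : inner_product ipV) (HU : inner_product ipU)
  (I : Type) p (A : I -> 'I_p.+1 -> V -> V) (At : I -> 'I_p.+1 -> U -> U)
  (HA0 : forall i l, A i l 0 = 0) (HAt0 : forall i l, At i l 0 = 0)
  (T : (nat -> V) -> (nat -> U)) :
  unitary_H2 ipV ipU T ->
  (forall i f, inH2 ipV f -> T (toeplitz (A i) f) = toeplitz (At i) (T f)) ->
  (forall f, inH2 ipV f -> T (shiftH2 f) = shiftH2 (T f)) ->
  exists (W : V -> U) (Wa : U -> V),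
      unitary ipV ipU W /\ adjoint_of ipV ipU W Wa /\
      (forall i l y, W (A i l (Wa y)) = At i l y).
Proof.
case=> Hin [Hlin [Hnorm Hsurj]] HT HS.
have ind : forall x : V, inH2 ipV (cns x (fun _ => 0)).
  by move=> x; apply/inH2_cns; exact: inH2_z.
have indU : forall x : U, inH2 ipU (cns x (fun _ => 0)).
  by move=> x; apply/inH2_cns; exact: inH2_z.
have HT0 : forall x, T (cns x (fun _ => 0)) = cns (T (cns x (fun _ => 0)) 0%N) (fun _ => 0).
  move=> e; set g := T (cns e (fun _ => 0)).
  have hg : inH2 ipU g := Hin _ (ind e).
  have htg : inH2 ipU (tl g) by move: hg; rewrite -{1}(cns_tl g) => /inH2_cns.
  set t := fun k => - tl g k.
  have ht : inH2 ipU t by apply/(inH2_ext (fun k => ipnormN HU (tl g k))).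
  have [h [hh Th]] := Hsurj t ht.
  have hs : inH2 ipV (shiftH2 h) by rewrite shift_cns; apply/inH2_cns.
  have Tf := Hlin 1 (cns e (fun _ => 0)) (shiftH2 h) (ind e) hs.
  have e1 : (fun k => 1 *: cns e (fun _ => 0) k + shiftH2 h k) = cns e h.
    by apply: funext => -[|k] /=; rewrite ?scale1r ?addr0 ?scaler0 ?add0r.
  have e2 : (fun k => 1 *: g k + T (shiftH2 h) k) = cns (g 0%N) (fun _ => 0).
    rewrite HS // Th; apply: funext => -[|k] /=; rewrite scale1r ?addr0 //.
    by rewrite /t /tl addrN.
  rewrite e1 -/g e2 in Tf.
  have hch : inH2 ipV (cns e h) by apply/inH2_cns.
  have n1 := Hnorm _ (ind e).
  have n2 := Hnorm _ hch.
  have n3 := Hnorm _ hh.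
  rewrite Th (H2norm2_ext (fun k => ipnormN HU (tl g k))) in n3.
  rewrite Tf (H2norm2_d HU) (H2norm2_cns _ hh) in n2.
  rewrite -/g (H2norm2_d HV) in n1.
  have a1 : H2norm2 ipU g = ipnorm ipU (g 0%N) ^+ 2 + H2norm2 ipU (tl g).
    by rewrite -{1}(cns_tl g) H2norm2_cns.
  have t0 := H2norm2_ge0 htg.
  have T0 : H2norm2 ipU (tl g) = 0 by lra.
  by apply: funext => -[|k] //=; exact: (H2norm2_eq0 HU htg T0 k).
pose W x := T (cns x (fun _ => 0)) 0%N.
have HT0' : forall x, T (cns x (fun _ => 0)) = cns (W x) (fun _ => 0) by exact: HT0.
have dec : forall f, inH2 ipV f -> T f = cns (W (f 0%N)) (T (tl f)).
  move=> f hf.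
  have htl : inH2 ipV (tl f) by move: hf; rewrite -{1}(cns_tl f) => /inH2_cns.
  have e : f = fun k => 1 *: cns (f 0%N) (fun _ => 0) k + shiftH2 (tl f) k.
    by apply: funext => -[|k] /=; rewrite ?scale1r ?addr0 ?scaler0 ?add0r.
  rewrite {1}e Hlin // ?HS // ?HT0' //; last by rewrite shift_cns; apply/inH2_cns.
  by apply: funext => -[|k] /=; rewrite ?scale1r ?addr0 ?scaler0 ?add0r.
have Wlin : lin W.
  move=> a x y; rewrite /W.
  have -> : cns (a *: x + y) (fun _ => 0) =
      (fun k => a *: cns x (fun _ => 0) k + cns y (fun _ => 0) k).
    by apply: funext => -[|k] //=; rewrite scaler0 addr0.
  by rewrite Hlin.
have Wn : forall x, ipnorm ipU (W x) = ipnorm ipV x.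
  move=> x; have := Hnorm _ (ind x).
  rewrite HT0' (H2norm2_d HU) (H2norm2_d HV) => h; apply/eqP.
  by rewrite -(@eqrXn2 _ 2); [apply/eqP|done|exact: ipnorm_ge0|exact: ipnorm_ge0].
have Ws : forall y, exists x, W x = y.
  move=> y; have [f [hf Tf]] := Hsurj _ (indU y).
  by exists (f 0%N); have := congr1 (fun g => g 0%N) Tf; rewrite dec.
have [Wa HWa] := choice Ws.
have fin : forall N f, inH2 ipV f -> (forall k, (N <= k)%N -> f k = 0) ->
    T f = fun k => W (f k).
  elim=> [|N IH] f hf hz.
    have -> : f = cns 0 (fun _ => 0) by apply: funext => k; rewrite hz // cnsE; case: eqP.
    rewrite HT0'; apply: funext => -[|k] //=; exact: (esym (lin0 Wlin)).
  have htl : inH2 ipV (tl f) by move: hf; rewrite -{1}(cns_tl f) => /inH2_cns.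
  rewrite dec // (IH (tl f)) //; first by apply: funext => -[|k].
  by move=> k hk; apply: hz.
exists W, Wa; split; first by split=> //; split.
split; first by move=> x y; rewrite -{1}(HWa y); exact: (polar Wlin HV HU Wn).
move=> i l y.
have hfin := toep_fin (HA0 i) (Wa y).
have hfi : inH2 ipV (toeplitz (A i) (cns (Wa y) (fun _ => 0))) := inH2_fin HV hfin.
have := HT i _ (ind (Wa y)).
rewrite HT0' (fin _ _ hfi hfin) => /(congr1 (fun g => g (nat_of_ord l))) /=.
by rewrite !toep_cns // HWa.
Qed.
End Gen.

Theorem theorem3p7 (R : realType) (p n : nat)
  (E F : lmodType R[i]) (ipE : E -> E -> R[i]) (ipF : F -> F -> R[i])
  (A : 'I_n.-1 -> 'I_p.+1 -> E -> E) (At : 'I_n.-1 -> 'I_p.+1 -> F -> F) :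
  (1 <= p)%N -> (1 < n)%N ->
  hilbert ipE -> hilbert ipF ->
  (forall i l, bounded_op ipE (A i l)) ->
  (forall i l, bounded_op ipF (At i l)) ->
  (exists U : (nat -> E) -> (nat -> F),
      unitary_H2 ipE ipF U /\
      (forall i f, inH2 ipE f -> U (toeplitz (A i) f) = toeplitz (At i) (U f)) /\
      (forall f, inH2 ipE f -> U (shiftH2 f) = shiftH2 (U f)))
  <->
  (exists (W : E -> F) (Wa : F -> E),
      unitary ipE ipF W /\ adjoint_of ipE ipF W Wa /\
      (forall i l y, W (A i l (Wa y)) = At i l y)).
Proof.
move=> _ _ [HE _] [HF _] HA HAt.
have HA0 : forall i l, A i l 0 = 0 by move=> i l; exact: lin0 (HA i l).1.
have HAt0 : forall i l, At i l 0 = 0 by move=> i l; exact: lin0 (HAt i l).1.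
split.
- case=> T [HU [HT HS]]. have X := fwd HE HF HA0 HAt0 HU HT HS. exact X.
- case=> W [Wa [HW [Hadj Hint]]]; have X := bwd HE HF HW Hadj Hint. exact X.
Qed.
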